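(* For $0\le a\le1/3$ let $R=\sqrt{a(4-3a)}$, $b=\tfrac12(2-a-R)$, $c=\tfrac12(2-a+R)$, and for $s\in\mathbb{R}$ define $$h(a,s)=(a+s(b-a))\bigl(c-(a+s(b-a))\bigr),$$ $$g(a,s)=3a(1-a)(1+s)+(9a^2-12a+2)s^2+\bigl(1-3a-(5-9a)s+(2-3a)s^2\bigr)R.$$ Then for $0\le a\le1/3$ and $0\le s\le1/2$: (i) $h(a,s)\le h(a,1-s)$; (ii) $g(a,s)\ge0$; and (iii) $g(a,s)+g(a,1-s)\ge0$. *)

(* Defs.v *)
From Stdlib Require Import Reals Lra.
Open Scope R_scope.

Definition Rr (a : R) : R := sqrt (a * (4 - 3 * a)).
Definition bb (a : R) : R := (2 - a - Rr a) / 2.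
Definition cc (a : R) : R := (2 - a + Rr a) / 2.

Definition h (a s : R) : R :=
  (a + s * (bb a - a)) * (cc a - (a + s * (bb a - a))).

Definition g (a s : R) : R :=
  3 * a * (1 - a) * (1 + s) + (9 * a ^ 2 - 12 * a + 2) * s ^ 2
  + (1 - 3 * a - (5 - 9 * a) * s + (2 - 3 * a) * s ^ 2) * Rr a.

(* Main.v *)
Require Import Defs.
From Stdlib Require Import Reals Lra Psatz.
Open Scope R_scope.

Definition GG t s := 12*(t^2-1)*(1+s) + (18 - 36*t^2 + 2*t^4)*s^2 + 4*t*(t^2-9) - 4*t*(5*t^2-21)*s + 4*t*(2*t^2-6)*s^2.

Lemma GG_pos t s : 3 <= t -> 0 <= s <= 1/2 -> 0 <= GG t s.
Proof.
  intros Ht Hs. set (u := t - 3).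
  assert (Hu : 0 <= u) by (unfold u; lra).
  replace (GG t s) with (96*(1-2*s) + u*(192*((1/2-s)*(3/2-s))) + u^2*(144*((1/2-s)*(2/3-s)))
     + u^3*(4-20*s+32*s^2) + 2*u^4*s^2) by (unfold GG, u; field).
  assert (0 <= (1/2-s)*(3/2-s)) by nra.
  assert (0 <= (1/2-s)*(2/3-s)) by nra.
  assert (0 <= 4-20*s+32*s^2) by nra.
  assert (0 <= u^2) by nra. assert (0 <= u^3) by (apply pow_le; lra).
  assert (0 <= u^4) by (apply pow_le; lra).
  assert (0 <= u*((1/2-s)*(3/2-s))) by nra.
  assert (0 <= u^2*((1/2-s)*(2/3-s))) by nra.
  assert (0 <= u^3*(4-20*s+32*s^2)) by nra.
  assert (0 <= u^4*s^2) by nra.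
  lra.
Qed.

Lemma GG_sum t s : 3 <= t -> 0 <= s <= 1/2 -> 0 <= GG t s + GG t (1-s).
Proof.
  intros Ht Hs. set (u := t - 3).
  assert (Hu : 0 <= u) by (unfold u; lra).
  replace (GG t s + GG t (1-s)) with (96*u*(1-2*s)^2 + 72*u^2*(1-2*s)^2
     + u^3*(20-64*s+64*s^2) + u^4*(2-4*s+4*s^2)) by (unfold GG, u; field).
  assert (0 <= 20-64*s+64*s^2) by nra.
  assert (0 <= 2-4*s+4*s^2) by nra.
  assert (0 <= (1-2*s)^2) by nra.
  assert (0 <= u^2) by nra. assert (0 <= u^3) by (apply pow_le; lra).
  assert (0 <= u^4) by (apply pow_le; lra).
  assert (0 <= u*(1-2*s)^2) by nra.
  assert (0 <= u^2*(1-2*s)^2) by nra.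
  assert (0 <= u^3*(20-64*s+64*s^2)) by nra.
  assert (0 <= u^4*(2-4*s+4*s^2)) by nra.
  lra.
Qed.

Definition gexp a s r :=
  3 * a * (1 - a) * (1 + s) + (9 * a ^ 2 - 12 * a + 2) * s ^ 2
  + (1 - 3 * a - (5 - 9 * a) * s + (2 - 3 * a) * s ^ 2) * r.

Lemma g_param t s : 0 <= t ->
  gexp (4/(3+t^2)) s (t*(4/(3+t^2))) = GG t s / (3+t^2)^2.
Proof.
  intros Ht. assert (0 < 3 + t^2) by nra.
  unfold gexp, GG. field. lra.
Qed.

Lemma g_r a s r : 0 <= a <= 1/3 -> 0 <= s <= 1/2 -> 0 <= r -> r*r = a*(4-3*a) ->
  0 <= gexp a s r /\ 0 <= gexp a s r + gexp a (1-s) r.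
Proof.
  intros Ha Hs Hr0 Hr2.
  destruct (Req_dec a 0) as [E|Ha0].
  - subst a. assert (r = 0) by nra. subst r. unfold gexp. split; nra.
  - assert (Hap : 0 < a) by lra.
    set (t := r / a).
    assert (Hrt : r = t * a) by (unfold t; field; lra).
    assert (Ht0 : 0 <= t) by (unfold t; apply Rmult_le_pos; [lra | apply Rlt_le, Rinv_0_lt_compat; lra]).
    assert (Hat : a * (3 + t^2) = 4).
    { rewrite Hrt in Hr2. apply Rmult_eq_reg_l with a; [|lra]. nra. }
    assert (Ht3 : 3 <= t).
    { assert (Hq : a * (t^2 - 9) >= 0) by nra. assert (9 <= t^2). { destruct (Rle_or_lt 9 (t^2)) as [|Hl]; [lra|]. assert (a*(t^2-9) < 0) by (apply Rmult_pos_neg; lra). lra. } nra. }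
    assert (Hd : 0 < 3 + t^2) by nra.
    assert (Ha' : a = 4 / (3 + t^2)) by (rewrite <- Hat; field; lra).
    rewrite Hrt, Ha'.
    rewrite !g_param by lra.
    assert (0 < (3+t^2)^2) by nra.
    split.
    + apply Rmult_le_pos; [apply GG_pos; lra | apply Rlt_le, Rinv_0_lt_compat; lra].
    + rewrite <- Rdiv_plus_distr.
      apply Rmult_le_pos; [apply GG_sum; lra | apply Rlt_le, Rinv_0_lt_compat; lra].
Qed.

Lemma h_r a s r : 0 <= a <= 1/3 -> 0 <= s <= 1/2 -> 0 <= r -> r*r = a*(4-3*a) ->
  let b := (2 - a - r)/2 in let c := (2 - a + r)/2 in
  (a + s*(b-a))*(c - (a + s*(b-a))) <= (a + (1-s)*(b-a))*(c - (a + (1-s)*(b-a))).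
Proof.
  intros Ha Hs Hr0 Hr2 b c.
  assert (E : (a + (1-s)*(b-a))*(c - (a + (1-s)*(b-a))) - (a + s*(b-a))*(c - (a + s*(b-a)))
     = (1-2*s)*((2-3*a-r)/2)*(r-a)) by (unfold b, c; field).
  assert (H1 : a <= r) by nra.
  assert (H2 : r <= 2 - 3*a) by nra.
  assert (0 <= (1-2*s)*((2-3*a-r)/2)) by nra.
  nra.
Qed.

Theorem lemmaB1 (a s : R) :
  0 <= a <= 1 / 3 -> 0 <= s <= 1 / 2 ->
  h a s <= h a (1 - s) /\ 0 <= g a s /\ 0 <= g a s + g a (1 - s).
Proof.
  intros Ha Hs.
  assert (Hr0 : 0 <= Rr a) by (unfold Rr; apply sqrt_pos).
  assert (Hr2 : Rr a * Rr a = a*(4-3*a)) by (unfold Rr; apply sqrt_sqrt; nra).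
  destruct (g_r a s (Rr a) Ha Hs Hr0 Hr2) as [G1 G2].
  split; [|split].
  - unfold h, bb, cc. apply (h_r a s (Rr a)); assumption.
  - exact G1.
  - exact G2.
Qed.
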